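(* Let $n\ge2$, let $\mathcal{P}$ be a distribution on $\mathcal{Z}=\mathcal{X}\times\mathcal{Y}$, let $h:\mathcal{Z}^{n-1}\times\mathcal{X}\to\mathbb{R}^d$ be a deterministic prediction function having $\beta$-train stability and $\beta_1$-test stability, and let $\ell:\mathbb{R}^d\times\mathcal{Y}\to[0,1]$ be $L$-Lipschitz in its first argument: $|\ell(r,y)-\ell(r',y)|\le L\|r-r'\|$. Then \[ \mathrm{gen}(h)\le\sqrt{4c_nL\sqrt{nd\,(n\beta^2+2\beta_1^2)}},\qquad c_n=\frac{n}{n-1}. \]
   Context: For datasets $z^{n-1},\hat z^{n-1}\in\mathcal{Z}^{n-1}$ differing in at most one entry, say $z_1\ne\hat z_1$ and $z_k=\hat z_k$ for $k\ne1$: $h$ has $\beta$-train stability if $\|h(z^{n-1},x_k)-h(\hat z^{n-1},x_k)\|^2\le\beta^2$ for all $k\ne1$ (where $x_k$ is the input of $z_k$), for all such pairs; and $\beta_1$-test stability if $\|h(z^{n-1},x')-h(\hat z^{n-1},x')\|^2\le\beta_1^2$ for all $x'\in\mathcal{X}$ and all such pairs. With true loss $\mathcal{L}(h,z^m)=\mathbb{E}_{(x',y')\sim\mathcal{P}}\ell(h(z^m,x'),y')$ and empirical loss $\widehat{\mathcal{L}}(h,z^m)=\frac1m\sum_{i}\ell(h(z^m,x_i),y_i)$, $\mathrm{gen}(h)=|\mathbb{E}_{Z^{n-1}\sim\mathcal{P}^{n-1}}[\widehat{\mathcal{L}}(h,Z^{n-1})-\mathcal{L}(h,Z^{n-1})]|$.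 *)

(* Defs.v *)
From HB Require Import structures.
From mathcomp Require Import all_boot all_order all_algebra.
From mathcomp Require Import all_classical all_reals all_analysis.
Set Implicit Arguments. Unset Strict Implicit. Unset Printing Implicit Defensive.
Import Order.TTheory GRing.Theory Num.Theory.
Local Open Scope classical_set_scope.
Local Open Scope ring_scope.

Definition eucl_norm {R : realType} {d : nat} (v : 'rV[R]_d) : R :=
  Num.sqrt (\sum_(i < d) (v ord0 i) ^+ 2).

(* Expectation over Z^m ~ P^m of a real function of an m-tuple, written as the
   iterated integral (coordinate 0 outermost).  For bounded measurable f this
   is the integral against the m-fold product measure P^m (Fubini). *)
Fixpoint iter_expect {dZ : measure_display} {Z : measurableType dZ}
  {R : realType} (P : probability Z R) (m : nat) : (m.-tuple Z -> R) -> R :=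
  match m with
  | 0 => fun f => f [tuple]
  | m'.+1 => fun f =>
      Rintegral P setT (fun z => iter_expect P (fun t : m'.-tuple Z => f [tuple of z :: t]))
  end.

Section learning.
Context {dX dY : measure_display} {X : measurableType dX} {Y : measurableType dY}
  {R : realType} {d : nat}.
Local Notation Z := (X * Y)%type.

Definition emp_loss (m : nat) (h : m.-tuple Z -> X -> 'rV[R]_d)
  (l : 'rV[R]_d -> Y -> R) (t : m.-tuple Z) : R :=
  m%:R^-1 * \sum_(i < m) l (h t (tnth t i).1) (tnth t i).2.

Definition true_loss (P : probability Z R) (m : nat)
  (h : m.-tuple Z -> X -> 'rV[R]_d) (l : 'rV[R]_d -> Y -> R) (t : m.-tuple Z) : R :=
  Rintegral P setT (fun z : Z => l (h t z.1) z.2).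

Definition gen (P : probability Z R) (m : nat)
  (h : m.-tuple Z -> X -> 'rV[R]_d) (l : 'rV[R]_d -> Y -> R) : R :=
  `| iter_expect P (fun t => emp_loss h l t - true_loss P h l t) |.

Definition differ_at_most_at (m : nat) (t t' : m.-tuple Z) (i : 'I_m) : Prop :=
  forall k : 'I_m, k != i -> tnth t k = tnth t' k.

Definition train_stable (m : nat) (h : m.-tuple Z -> X -> 'rV[R]_d) (beta : R) :=
  forall (t t' : m.-tuple Z) (i : 'I_m), differ_at_most_at t t' i ->
  forall k : 'I_m, k != i ->
    eucl_norm (h t (tnth t k).1 - h t' (tnth t k).1) ^+ 2 <= beta ^+ 2.

Definition test_stable (m : nat) (h : m.-tuple Z -> X -> 'rV[R]_d) (beta1 : R) :=
  forall (t t' : m.-tuple Z) (i : 'I_m), differ_at_most_at t t' i ->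
  forall x' : X, eucl_norm (h t x' - h t' x') ^+ 2 <= beta1 ^+ 2.

End learning.

(* Main.v *)
Require Import Defs.
From HB Require Import structures.
From mathcomp Require Import all_boot all_order all_algebra.
From mathcomp Require Import all_classical all_reals all_analysis.
From mathcomp Require Import measurable_realfun.
From mathcomp Require Import lra.
Import Order.TTheory GRing.Theory Num.Theory.
Import numFieldNormedType.Exports.
Local Open Scope classical_set_scope.
Local Open Scope ring_scope.
Set Implicit Arguments. Unset Strict Implicit. Unset Printing Implicit Defensive.

Section lib.
Context {dZ : measure_display} {Z : measurableType dZ} {R : realType}
  (P : probability Z R).

Lemma PT : P setT = 1%E. Proof. exact: probability_setT. Qed.

Lemma intg_bnd (f : Z -> R) (M : R) : measurable_fun setT f ->
  (forall x, `|f x| <= M) -> P.-integrable setT (EFin \o f).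
Proof.
move=> mf fM; apply: measurable_bounded_integrable => //.
  by have := probability_setT P; rewrite /= => ->; rewrite ltry.
exists M; split; first exact: num_real.
move=> y My x _; exact: (le_trans (fM x) (ltW My)).
Qed.

Lemma Rint_bnd (f : Z -> R) (M : R) : measurable_fun setT f ->
  (forall x, `|f x| <= M) -> `|Rintegral P setT f| <= M.
Proof.
move=> mf fM; have fi := intg_bnd mf fM.
apply: (le_trans (le_normr_Rintegral _ _)) => //.
have -> : M = Rintegral P setT (fun _ => M).
  rewrite Rintegral_cst // (_ : fine _ = 1) ?mulr1 //; exact: (congr1 fine PT).
apply: le_Rintegral => //.
- apply: (@intg_bnd _ M); first exact: measurableT_comp.
  by move=> x; rewrite normr_id.
- by apply: (@intg_bnd _ `|M|) => // x.
Qed.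

Lemma Rint_cst (c : R) : Rintegral P setT (fun _ => c) = c.
Proof. rewrite Rintegral_cst // (_ : fine _ = 1) ?mulr1 //; exact: (congr1 fine PT). Qed.

Lemma meas_param {dT} (T : measurableType dT) (f : T * Z -> R) (M : R) :
  measurable_fun setT f -> (forall p, `|f p| <= M) ->
  measurable_fun setT (fun s => Rintegral P setT (fun z => f (s, z))).
Proof.
move=> mf fM.
have mfs s : measurable_fun setT (fun z => f (s, z)) by exact: measurableT_comp.
pose g := fun p => (f p + M)%:E.
have mg : measurable_fun setT g.
  by apply/measurable_EFinP; apply: measurable_funD.
have g0 p : (0 <= g p)%E.
  rewrite lee_fin -lerBlDr sub0r; have := fM p; rewrite ler_norml => /andP[] //.
have mF : measurable_fun setT (fubini_F P g) by exact: measurable_fun_fubini_tonelli_F.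
have E s : Rintegral P setT (fun z => f (s, z)) = fine (fubini_F P g s) - M.
  have -> : fine (fubini_F P g s) = Rintegral P setT (fun z => f (s, z) + M) by [].
  rewrite RintegralD //.
  - by rewrite Rint_cst addrK.
  - exact: (@intg_bnd _ M).
  - by apply: (@intg_bnd _ `|M|) => // x.
rewrite (_ : (fun s => _) = (fun s => fine (fubini_F P g s) - M)); last first.
  by apply/funext => s; rewrite E.
apply: measurable_funB => //; exact: measurableT_comp.
Qed.

Lemma ML m : forall dT (T : measurableType dT) (f : T * m.-tuple Z -> R) M,
  measurable_fun setT f -> (forall p, `|f p| <= M) ->
  measurable_fun setT (fun s => iter_expect P (fun t => f (s, t))) /\
  forall s, `|iter_expect P (fun t => f (s, t))| <= M.
Proof.
elim: m => [|m IH] dT T f M mf fM.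
  split; last by move=> s; exact: fM.
  exact: (measurable_fun_pair1 _ mf).
pose f' : (T * Z) * m.-tuple Z -> R := fun p => f (p.1.1, [tuple of p.1.2 :: p.2]).
have mf' : measurable_fun setT f'.
  apply: (measurableT_comp mf); apply: measurable_fun_pair.
    exact: (measurableT_comp measurable_fst measurable_fst).
  apply: measurable_cons; last exact: measurable_snd.
  exact: (measurableT_comp measurable_snd measurable_fst).
have [mg gM] := IH _ _ f' M mf' (fun p => fM _).
split.
  exact: (meas_param (f := fun q => iter_expect P (fun t => f' (q, t))) mg gM).
move=> s /=; apply: (Rint_bnd (f := fun z => iter_expect P (fun t => f' ((s, z), t)))).
  exact: (measurable_fun_pair2 _ mg).
by move=> z; exact: gM.
Qed.

Lemma E_ge0 m (f : m.-tuple Z -> R) : (forall t, 0 <= f t) -> 0 <= iter_expect P f.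
Proof.
elim: m f => [|m IH] f f0 /=; first exact: f0.
by apply: Rintegral_ge0 => z _; apply: IH.
Qed.

Lemma mcons m (w : Z) : measurable_fun setT (fun t : m.-tuple Z => [tuple of w :: t]).
Proof. by apply: measurable_cons => //; exact: measurable_cst. Qed.

Lemma msec m (f : m.+1.-tuple Z -> R) M : measurable_fun setT f ->
  (forall t, `|f t| <= M) ->
  measurable_fun setT (fun w => iter_expect P (fun t => f [tuple of w :: t])).
Proof.
move=> mf fM.
have mf2 : measurable_fun setT (fun p : Z * m.-tuple Z => f [tuple of p.1 :: p.2]).
  apply: (measurableT_comp mf); apply: measurable_cons.
    exact: measurable_fst.
  exact: measurable_snd.
have [mg _] := ML (T := Z) (M := M) mf2 (fun p => fM _).
exact: mg.
Qed.

Lemma E_bnd m (f : m.-tuple Z -> R) M : measurable_fun setT f ->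
  (forall t, `|f t| <= M) -> `|iter_expect P f| <= M.
Proof.
elim: m f M => [|m IH] f M mf fM /=; first exact: fM.
apply: (Rint_bnd (f := fun z => iter_expect P (fun t => f [tuple of z :: t]))).
  exact: (msec mf fM).
move=> z; apply: IH; [exact: (measurableT_comp mf (mcons _)) | move=> t; exact: fM].
Qed.

Lemma intgZ (F : Z -> R) a : P.-integrable setT (EFin \o F) ->
  P.-integrable setT (EFin \o (fun x => a * F x)).
Proof.
move=> iF.
have -> : EFin \o (fun x => a * F x) = (fun x => a%:E * (EFin \o F) x)%E.
  by apply/funext => x; rewrite /= EFinM.
exact: integrableZl.
Qed.

Lemma E_lin m (f g : m.-tuple Z -> R) Mf Mg a b : measurable_fun setT f ->
  measurable_fun setT g -> (forall t, `|f t| <= Mf) -> (forall t, `|g t| <= Mg) ->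
  iter_expect P (fun t => a * f t + b * g t) =
  a * iter_expect P f + b * iter_expect P g.
Proof.
elim: m f g Mf Mg => [|m IH] f g Mf Mg mf mg fM gM //=.
under eq_Rintegral => w _.
  rewrite (IH (fun t => f [tuple of w :: t]) (fun t => g [tuple of w :: t]) Mf Mg
    (measurableT_comp mf (mcons _)) (measurableT_comp mg (mcons _))
    (fun t => fM _) (fun t => gM _)).
  over.
have iF : P.-integrable setT (EFin \o (fun w => iter_expect P (fun t => f [tuple of w :: t]))).
  apply: (intg_bnd (M := Mf)); first exact: (msec mf fM).
  move=> w; apply: E_bnd => //.
  exact: (measurableT_comp mf (mcons _)).
have iG : P.-integrable setT (EFin \o (fun w => iter_expect P (fun t => g [tuple of w :: t]))).
  apply: (intg_bnd (M := Mg)); first exact: (msec mg gM).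
  move=> w; apply: E_bnd => //.
  exact: (measurableT_comp mg (mcons _)).
rewrite RintegralD //; last first.
  by apply: intgZ.
  by apply: intgZ.
by rewrite !RintegralZl.
Qed.

Lemma E_cst m (c : R) : iter_expect P (fun _ : m.-tuple Z => c) = c.
Proof.
elim: m => [|m IH] //=.
by under eq_Rintegral do rewrite IH; rewrite Rint_cst.
Qed.

Lemma E_sum m (I : Type) (s : seq I) (G : I -> m.-tuple Z -> R) M :
  (forall i, measurable_fun setT (G i)) -> (forall i t, `|G i t| <= M) ->
  iter_expect P (fun t => \sum_(i <- s) G i t) = \sum_(i <- s) iter_expect P (G i).
Proof.
move=> mG GM; elim: s => [|i s IH].
  by under [X in iter_expect P X]funext do rewrite big_nil; rewrite E_cst big_nil.
under [X in iter_expect P X]funext do rewrite big_cons -[G i _]mul1r -[\sum_(_ <- _) _]mul1r.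
rewrite (E_lin (Mf := M) (Mg := \sum_(j <- s) M)) //.
- by rewrite !mul1r IH big_cons.
- by apply: measurable_sum.
- move=> t; apply: (le_trans (ler_norm_sum _ _ _)); exact: ler_sum.
Qed.
Lemma Rfubini (Psi : Z * Z -> R) M : measurable_fun setT Psi ->
  (forall p, 0 <= Psi p) -> (forall p, Psi p <= M) ->
  Rintegral P setT (fun x => Rintegral P setT (fun y => Psi (x, y))) =
  Rintegral P setT (fun y => Rintegral P setT (fun x => Psi (x, y))).
Proof.
move=> mPsi P0 PM.
have bnd p : `|Psi p| <= M by rewrite ger0_norm.
have fin1 x : (\int[P]_y (Psi (x, y))%:E)%E \is a fin_num.
  apply: integrable_fin_num => //; apply: (intg_bnd (M := M)) => //.
  exact: (measurable_fun_pair2 _ mPsi).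
have fin2 y : (\int[P]_x (Psi (x, y))%:E)%E \is a fin_num.
  apply: integrable_fin_num => //; apply: (intg_bnd (M := M)) => //.
  exact: (measurable_fun_pair1 _ mPsi).
rewrite /Rintegral; congr fine.
under eq_integral do rewrite fineK //.
under [RHS]eq_integral do rewrite fineK //.
apply: (fubini_tonelli (fun p => (Psi p)%:E)).
  exact/measurable_EFinP.
by move=> p; rewrite lee_fin.
Qed.
Lemma E_comm m (F : m.-tuple Z * Z -> R) M : measurable_fun setT F ->
  (forall p, 0 <= F p) -> (forall p, F p <= M) ->
  iter_expect P (fun t => Rintegral P setT (fun z => F (t, z))) =
  Rintegral P setT (fun z => iter_expect P (fun t => F (t, z))).
Proof.
elim: m F M => [|m IH] F M mF F0 FM //=.
have bnd p : `|F p| <= M by rewrite ger0_norm.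
have mFw w : measurable_fun setT (fun p : m.-tuple Z * Z => F ([tuple of w :: p.1], p.2)).
  apply: (measurableT_comp mF); apply: measurable_fun_pair.
    exact: (measurableT_comp (mcons w) measurable_fst).
  exact: measurable_snd.
under eq_Rintegral => w _.
  rewrite (IH (fun p => F ([tuple of w :: p.1], p.2)) M (mFw w) (fun _ => F0 _) (fun _ => FM _)).
  over.
have mG : measurable_fun setT (fun p : (Z * Z) * m.-tuple Z => F ([tuple of p.1.1 :: p.2], p.1.2)).
  apply: (measurableT_comp mF); apply: measurable_fun_pair.
    apply: measurable_cons; last exact: measurable_snd.
    exact: (measurableT_comp measurable_fst measurable_fst).
  exact: (measurableT_comp measurable_snd measurable_fst).
have [mPsi bPsi] := ML mG (fun _ => bnd _).
apply: (Rfubini (Psi := fun q => iter_expect P (fun t => F ([tuple of q.1 :: t], q.2))) (M := M)).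
- exact: mPsi.
- by move=> q; apply: E_ge0 => t; exact: F0.
- by move=> q; exact: (le_trans (ler_norm _) (bPsi q)).
Qed.
Definition tset m (t : m.-tuple Z) (i : 'I_m) (z : Z) : m.-tuple Z :=
  [tuple (if j == i then z else tnth t j) | j < m].

Lemma tset0 m (w z : Z) (t : m.-tuple Z) :
  tset [tuple of w :: t] ord0 z = [tuple of z :: t].
Proof.
apply: eq_from_tnth => k; rewrite tnth_mktuple.
case: (unliftP ord0 k) => [k' ->|->]; last by rewrite eqxx tnth0.
by rewrite eq_sym (negbTE (neq_lift _ _)) !tnthS.
Qed.

Lemma tsetS m (w z : Z) (t : m.-tuple Z) (j : 'I_m) :
  tset [tuple of w :: t] (lift ord0 j) z = [tuple of w :: tset t j z].
Proof.
apply: eq_from_tnth => k; rewrite tnth_mktuple.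
case: (unliftP ord0 k) => [k' ->|->].
  rewrite (tnthS w (tset t j z) k') /tset tnth_mktuple (inj_eq (@lift_inj _ ord0)).
  by rewrite (tnthS w t k').
by rewrite (negbTE (neq_lift _ _)) !tnth0.
Qed.

Lemma mtset m (i : 'I_m) :
  measurable_fun setT (fun p : m.-tuple Z * Z => tset p.1 i p.2).
Proof.
apply/measurable_fun_tnthP => j.
rewrite (_ : _ \o _ = fun p => if j == i then p.2 else tnth p.1 j); last first.
  by apply/funext => p /=; rewrite tnth_mktuple.
case: (j == i); first exact: measurable_snd.
exact: (measurableT_comp (measurable_tnth j) measurable_fst).
Qed.
Lemma E_exch m (F : m.-tuple Z * Z -> R) M (i : 'I_m) : measurable_fun setT F ->
  (forall p, 0 <= F p) -> (forall p, F p <= M) ->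
  iter_expect P (fun t => Rintegral P setT (fun z => F (tset t i z, tnth t i))) =
  iter_expect P (fun t => Rintegral P setT (fun z => F (t, z))).
Proof.
elim: m F M i => [|m IH] F M i mF F0 FM; first by case: i.
have mFw w : measurable_fun setT (fun p : m.-tuple Z * Z => F ([tuple of w :: p.1], p.2)).
  apply: (measurableT_comp mF); apply: measurable_fun_pair.
    exact: (measurableT_comp (mcons w) measurable_fst).
  exact: measurable_snd.
case: (unliftP ord0 i) => [j ->|->] /=.
  apply: eq_Rintegral => w _.
  have := IH (fun p => F ([tuple of w :: p.1], p.2)) M j (mFw w) (fun _ => F0 _) (fun _ => FM _).
  move=> /= <-; congr iter_expect; apply/funext => t; apply: eq_Rintegral => z _.
  by rewrite tsetS (tnthS w t j).
have bnd p : `|F p| <= M by rewrite ger0_norm.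
have mG : measurable_fun setT (fun p : (Z * Z) * m.-tuple Z => F ([tuple of p.1.1 :: p.2], p.1.2)).
  apply: (measurableT_comp mF); apply: measurable_fun_pair.
    apply: measurable_cons; last exact: measurable_snd.
    exact: (measurableT_comp measurable_fst measurable_fst).
  exact: (measurableT_comp measurable_snd measurable_fst).
have [mPsi bPsi] := ML mG (fun _ => bnd _).
have mH w : measurable_fun setT (fun p : m.-tuple Z * Z => F ([tuple of p.2 :: p.1], w)).
  apply: (measurableT_comp mF); apply: measurable_fun_pair.
    apply: measurable_cons; [exact: measurable_snd | exact: measurable_fst].
  exact: measurable_cst.
transitivity (Rintegral P setT (fun w => Rintegral P setT (fun z =>
   iter_expect P (fun t => F ([tuple of z :: t], w))))).
  apply: eq_Rintegral => w _.
  rewrite -(E_comm (F := fun p => F ([tuple of p.2 :: p.1], w)) (M := M) (mH w) (fun _ => F0 _) (fun _ => FM _)).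
  congr iter_expect; apply/funext => t; apply: eq_Rintegral => z _.
  by rewrite tset0 tnth0.
transitivity (Rintegral P setT (fun w => Rintegral P setT (fun z =>
   iter_expect P (fun t => F ([tuple of w :: t], z))))); last first.
  apply: eq_Rintegral => w _.
  by rewrite -(E_comm (F := fun p => F ([tuple of w :: p.1], p.2)) (M := M) (mFw w) (fun _ => F0 _) (fun _ => FM _)).
apply: (Rfubini (Psi := fun q => iter_expect P (fun t => F ([tuple of q.2 :: t], q.1))) (M := M)).
- move: (measurableT_comp mPsi (@measurable_swap _ _ Z Z)); exact.
- by move=> q; apply: E_ge0 => t; exact: F0.
- by move=> q; exact: (le_trans (ler_norm _) (bPsi (q.2, q.1))).
Qed.
End lib.
Lemma final_ineq (R : realType) (n d : nat) (G L beta beta1 : R) : (2 <= n)%N ->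
  0 <= G -> G <= 1 ->
  G <= (if d == 0%N then 0 else if 0 <= L then L * `|beta1| else 0) ->
  G <= Num.sqrt (4 * (n%:R / (n%:R - 1)) * L *
      Num.sqrt (n%:R * d%:R * (n%:R * beta ^+ 2 + 2 * beta1 ^+ 2))).
Proof.
move=> n2 G0 G1.
have Gz : G <= 0 -> G <= Num.sqrt (4 * (n%:R / (n%:R - 1)) * L *
      Num.sqrt (n%:R * d%:R * (n%:R * beta ^+ 2 + 2 * beta1 ^+ 2))).
  by move=> Gle; apply: (le_trans Gle); exact: sqrtr_ge0.
case: eqP => [_|/eqP dn0]; first exact: Gz.
case: ifP => [L0|_]; last exact: Gz.
move=> GLb.
have nR : 2 <= n%:R :> R by rewrite (ler_nat R 2 n).
have dR : 1 <= d%:R :> R by rewrite (ler_nat R 1 d) lt0n.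
have S1 : `|beta1| <= Num.sqrt (n%:R * d%:R * (n%:R * beta ^+ 2 + 2 * beta1 ^+ 2)).
  rewrite -sqrtr_sqr ler_wsqrtr //.
  have h1 : beta1 ^+ 2 <= n%:R * beta ^+ 2 + 2 * beta1 ^+ 2.
    have := sqr_ge0 beta; have := sqr_ge0 beta1; nra.
  have h2 : 1 <= n%:R * d%:R :> R by nra.
  have := sqr_ge0 beta1; nra.
have c1 : 1 <= n%:R / (n%:R - 1) :> R.
  by rewrite ler_pdivlMr ?mul1r; lra.
set S := Num.sqrt _ in S1.
have Q : L * `|beta1| <= 4 * (n%:R / (n%:R - 1)) * L * S.
  have LS : L * `|beta1| <= L * S by rewrite ler_wpM2l.
  have S0 : 0 <= S by apply: le_trans S1.
  have LS0 : 0 <= L * S by rewrite mulr_ge0.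
  set c := n%:R / (n%:R - 1) in c1 *.
  have : L * S <= (4 * c) * (L * S) by rewrite ler_peMl //; lra.
  rewrite !mulrA; lra.
rewrite -(ger0_norm G0) -sqrtr_sqr ler_wsqrtr //.
apply: (le_trans _ Q); apply: (le_trans _ GLb); nra.
Qed.

Lemma keyL (R : realType) d (v : 'rV[R]_d) (L b : R) :
  eucl_norm v ^+ 2 <= b ^+ 2 ->
  L * eucl_norm v <= (if d == 0%N then 0 else if 0 <= L then L * `|b| else 0).
Proof.
case: d v => [|d] v H /=.
  by rewrite /eucl_norm big_ord0 sqrtr0 mulr0.
have N0 : 0 <= eucl_norm v by exact: sqrtr_ge0.
have Nb : eucl_norm v <= `|b|.
  by rewrite -(ger0_norm N0) -!sqrtr_sqr ler_wsqrtr.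
case: ifP => L0; first by rewrite ler_wpM2l.
have : L < 0 by rewrite ltNge L0.
nra.
Qed.

Lemma avg_bnd (R : realType) m (x : 'I_m -> R) c : (0 < m)%N ->
  (forall i, `|x i| <= c) -> `|m%:R^-1 * \sum_(i < m) x i| <= c.
Proof.
move=> m0 xc; rewrite normrM ger0_norm ?invr_ge0 ?ler0n //.
rewrite ler_pdivrMl ?ltr0n //.
apply: (le_trans (ler_norm_sum _ _ _)).
apply: (le_trans (ler_sum _ (fun i _ => xc i))).
by rewrite sumr_const card_ord mulr_natl.
Qed.

Theorem theorem5 (dX dY : measure_display) (X : measurableType dX)
  (Y : measurableType dY) (R : realType) (n d : nat) (hn : (2 <= n)%N)
  (P : probability (X * Y)%type R)
  (h : (n.-1).-tuple (X * Y)%type -> X -> 'rV[R]_d)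
  (l : 'rV[R]_d -> Y -> R) (beta beta1 L : R)
  (hmeas : measurable_fun [set: ((n.-1).-tuple (X * Y)%type * (X * Y))%type]
             (fun p => l (h p.1 p.2.1) p.2.2))
  (hl01 : forall r y, 0 <= l r y <= 1)
  (hlip : forall r r' y, `|l r y - l r' y| <= L * eucl_norm (r - r'))
  (htrain : train_stable h beta)
  (htest : test_stable h beta1) :
  gen P h l <=
    Num.sqrt (4 * (n%:R / (n%:R - 1)) * L *
      Num.sqrt (n%:R * d%:R * (n%:R * beta ^+ 2 + 2 * beta1 ^+ 2))).
Proof.
have m0 : (0 < n.-1)%N by rewrite -ltnS prednK // (leq_trans _ hn).
pose F : (n.-1).-tuple (X * Y) * (X * Y) -> R := fun p => l (h p.1 p.2.1) p.2.2.
have mF : measurable_fun setT F := hmeas.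
have F0 p : 0 <= F p by have /andP[] := hl01 (h p.1 p.2.1) p.2.2.
have F1 p : F p <= 1 by have /andP[] := hl01 (h p.1 p.2.1) p.2.2.
have Fb p : `|F p| <= 1 by rewrite ger0_norm.
set Bd := (if d == 0%N then 0 else if 0 <= L then L * `|beta1| else 0).
have key t t' i : differ_at_most_at t t' i -> forall z, `|F (t, z) - F (t', z)| <= Bd.
  move=> dt z; apply: (le_trans (hlip _ _ _)); apply: keyL; exact: htest dt z.1.
have dset t i z : differ_at_most_at t (tset t i z) i.
  by move=> k ki; rewrite tnth_mktuple (negbTE ki).
pose A i t := F (t, tnth t i).
pose B t := Rintegral P setT (fun z => F (t, z)).
pose C i t := Rintegral P setT (fun z => F (tset t i z, tnth t i)).
pose D i t := A i t - B t.
have mA i : measurable_fun setT (A i).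
  apply: (measurableT_comp mF); apply: measurable_fun_pair => //.
  exact: measurable_tnth.
have mB : measurable_fun setT B by exact: (meas_param P (M := 1)).
have mC i : measurable_fun setT (C i).
  apply: (meas_param P (f := fun p => F (tset p.1 i p.2, tnth p.1 i)) (M := 1)) => //.
  apply: (measurableT_comp mF); apply: measurable_fun_pair; first exact: mtset.
  exact: (measurableT_comp (measurable_tnth i) measurable_fst).
have B0 t : 0 <= B t by apply: Rintegral_ge0 => z _.
have B1 t : `|B t| <= 1.
  apply: Rint_bnd => //; exact: (measurableT_comp mF (pair1_measurable _)).
have C1 i t : `|C i t| <= 1.
  apply: Rint_bnd => //.
  apply: (measurableT_comp mF); apply: measurable_fun_pair.
    exact: (measurableT_comp (mtset i) (pair1_measurable t)).
  exact: measurable_cst.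
have A1 i t : `|A i t| <= 1 by exact: Fb.
have mD i : measurable_fun setT (D i) by apply: measurable_funB.
have D1 i t : `|D i t| <= 1.
  have := F0 (t, tnth t i); have := F1 (t, tnth t i); have := B0 t.
  have := B1 t; rewrite /D /A ler_norml => /andP[? ?]; rewrite ler_norml; lra.
have ED i : `|iter_expect P (D i)| <= Bd.
  have -> : iter_expect P (D i) = iter_expect P (fun t => 1 * A i t + (-1) * C i t).
    rewrite (E_lin P (Mf := 1) (Mg := 1)) //.
    rewrite /D; under [X in iter_expect P X]funext => t do rewrite -[A i t]mul1r -[- B t]mulN1r.
    rewrite (E_lin P (Mf := 1) (Mg := 1)) //; congr (_ + _ * _).
    by rewrite /B /C (E_exch P (F := F) (M := 1)).
  apply: E_bnd.
    by apply: measurable_funD; apply: measurable_funM => //; exact: measurable_cst.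
  move=> t; rewrite mul1r mulN1r /A /C.
  rewrite -[F (t, tnth t i)](Rint_cst P) -RintegralB //.
  - apply: Rint_bnd.
      apply: measurable_funB; first exact: measurable_cst.
      apply: (measurableT_comp mF); apply: measurable_fun_pair.
        exact: (measurableT_comp (mtset i) (pair1_measurable t)).
      exact: measurable_cst.
    by move=> z; apply: key.
  - by apply: (intg_bnd P (M := `|F (t, tnth t i)|)) => //; exact: measurable_cst.
  - apply: (intg_bnd P (M := 1)) => //.
    apply: (measurableT_comp mF); apply: measurable_fun_pair.
      exact: (measurableT_comp (mtset i) (pair1_measurable t)).
    exact: measurable_cst.
have ED1 i : `|iter_expect P (D i)| <= 1 by apply: E_bnd.
have Eq : (fun t => emp_loss h l t - true_loss P h l t) =
  (fun t => (n.-1)%:R^-1 * (\sum_(i < n.-1) D i t) + 0 * 0).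
  apply/funext => t; rewrite mulr0 addr0 /emp_loss /true_loss /D sumrB sumr_const card_ord.
  rewrite mulrBr; congr (_ - _).
  by rewrite -[B t *+ _]mulr_natl mulrA mulVf ?mul1r // pnatr_eq0 -lt0n.
have Gdef : gen P h l = `|(n.-1)%:R^-1 * \sum_(i < n.-1) iter_expect P (D i)|.
  rewrite /gen Eq (E_lin P (f := fun t => \sum_(i < n.-1) D i t) (g := fun _ => 0)
      (Mf := \sum_(i < n.-1) 1) (Mg := 0)).
  - by rewrite mul0r addr0 (@E_sum _ _ _ P _ _ _ _ 1).
  - by apply: measurable_sum.
  - exact: measurable_cst.
  - move=> t; apply: (le_trans (ler_norm_sum _ _ _)); exact: ler_sum.
  - by move=> t; rewrite normr0.
apply: (final_ineq (G := gen P h l)) => //.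
- by rewrite /gen normr_ge0.
- by rewrite Gdef; apply: avg_bnd.
- by rewrite Gdef; apply: avg_bnd.
Qed.
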